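(* Let $\mathcal{T}$ be a set of monomials in $[n]$, and let $D^\star$ be the Hasse diagram of $\mathcal{M}^\star$ and $G^\star$ its underlying undirected graph. If $G^\star$ contains a cycle, then one of the following holds: (A) there exist $m_1,m_2,m_3\in\mathcal{T}$ with $m_1\cap m_2\cap m_3\neq\emptyset$ such that $m_3\cap(m_1\cup m_2)$ is a proper superset of both $m_3\cap m_1$ and $m_3\cap m_2$; (B) there exist pairwise different $m_1,\dots,m_k\in\mathcal{T}$, $k\ge3$, such that for all $i,j\in[k]$, $m_i\cap m_j\neq\emptyset$ if and only if $i$ and $j$ differ by at most $1$ modulo $k$.
   Context: A monomial is a nonempty subset of $[n]=\{1,\dots,n\}$; $\mathcal{S}=\{\{i\}:i\in[n]\}$. Define $\mathcal{M}'=\{\bigcap_{m\in I}m: I\subseteq\mathcal{T}, I\neq\emptyset, \bigcap_{m\in I}m\neq\emptyset\}$ and $\mathcal{M}^\star=\mathcal{M}'\cup\mathcal{S}$. The digraph $D^\star$ has node set $\mathcal{M}^\star$ and an arc $(m_1,m_2)$ for $m_1,m_2\in\mathcal{M}^\star$ if and only if $m_2\subsetneq m_1$ and there is no $m_3\in\mathcal{M}^\star$ with $m_2\subsetneq m_3\subsetneq m_1$. *)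

(* Defs.v *)
From mathcomp Require Import all_boot.
Set Implicit Arguments. Unset Strict Implicit. Unset Printing Implicit Defensive.

(* Variables are [n] = 'I_n; a monomial is a nonempty {set 'I_n}. *)
Section Defs.
Variable n : nat.
Implicit Types (T : {set {set 'I_n}}) (m : {set 'I_n}).

Definition Mprime T : {set {set 'I_n}} :=
  [set m | [exists I : {set {set 'I_n}},
      [&& I \subset T, I != set0 & \bigcap_(x in I) x == m]] && (m != set0)].

Definition singletons : {set {set 'I_n}} := [set [set i] | i : 'I_n].

Definition Mstar T := Mprime T :|: singletons.

Definition hasse_arc T m1 m2 : bool :=
  [&& m1 \in Mstar T, m2 \in Mstar T, m2 \proper m1 &
      [forall m3 in Mstar T, ~~ ((m2 \proper m3) && (m3 \proper m1))]].

Definition Gstar_edge T m1 m2 : bool := hasse_arc T m1 m2 || hasse_arc T m2 m1.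

Definition Gstar_has_cycle T : Prop :=
  exists (k : nat) (c : nat -> {set 'I_n}),
    [/\ 3 <= k,
        (forall i, i < k -> c i \in Mstar T),
        (forall i j, i < k -> j < k -> c i = c j -> i = j) &
        (forall i, i < k -> Gstar_edge T (c i) (c (i.+1 %% k)))].

Definition condA T : Prop :=
  exists m1 m2 m3, [/\ [&& m1 \in T, m2 \in T & m3 \in T],
    m1 :&: m2 :&: m3 != set0,
    (m3 :&: m1) \proper (m3 :&: (m1 :|: m2)) &
    (m3 :&: m2) \proper (m3 :&: (m1 :|: m2))].

Definition cyc_close (k i j : nat) : bool :=
  [|| i == j, i.+1 %% k == j | j.+1 %% k == i].

Definition condB T : Prop :=
  exists (k : nat) (m : nat -> {set 'I_n}),
    [/\ 3 <= k,
        (forall i, i < k -> m i \in T),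
        (forall i j, i < k -> j < k -> m i = m j -> i = j) &
        (forall i j, i < k -> j < k ->
           (m i :&: m j != set0) = cyc_close k i j)].
End Defs.

(* Main.v *)
Require Import Defs.
From mathcomp Require Import all_boot zify.
Set Implicit Arguments. Unset Strict Implicit. Unset Printing Implicit Defensive.

Definition own3 n (T : {set {set 'I_n}}) := forall (v a b c : {set 'I_n}),
  v != set0 -> a \in T -> b \in T -> c \in T ->
  v \subset a -> v \subset b -> v \subset c -> [\/ a = b, b = c | a = c].

Lemma Mstar_neq0 n (T : {set {set 'I_n}}) x : x \in Mstar T -> x != set0.
Proof.
rewrite /Mstar inE => /orP[]; first by rewrite /Mprime inE => /andP[].
by case/imsetP => i _ ->; apply/set0Pn; exists i; rewrite inE.
Qed.

Lemma T_Mstar n (T : {set {set 'I_n}}) a :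
  (forall m, m \in T -> m != set0) -> a \in T -> a \in Mstar T.
Proof.
move=> hT aT; rewrite /Mstar inE; apply/orP; left.
rewrite /Mprime inE hT // andbT; apply/existsP; exists [set a].
rewrite sub1set aT /= big_set1 eqxx andbT.
by apply/set0Pn; exists a; rewrite inE.
Qed.

Lemma capT_Mstar n (T : {set {set 'I_n}}) a b :
  a \in T -> b \in T -> a :&: b != set0 -> a :&: b \in Mstar T.
Proof.
move=> aT bT ab0; rewrite /Mstar inE; apply/orP; left.
rewrite /Mprime inE ab0 andbT; apply/existsP; exists [set a; b].
rewrite subUset !sub1set aT bT /=.
apply/andP; split; first by apply/set0Pn; exists a; rewrite !inE eqxx.
apply/eqP/setP => i; rewrite inE; apply/bigcapP/andP => [H|[ia ib] y].
  by split; apply: H; rewrite !inE eqxx ?orbT.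
by rewrite !inE => /orP[]/eqP->.
Qed.

Lemma Mstar_struct n (T : {set {set 'I_n}}) x : own3 T -> x \in Mstar T ->
  [\/ x \in T, exists a b, [/\ a \in T, b \in T, a != b & x = a :&: b]
    | exists i, x = [set i]].
Proof.
move=> o3; rewrite /Mstar inE => /orP[]; last first.
  by case/imsetP => i _ ->; constructor 3; exists i.
rewrite /Mprime inE => /andP[/existsP[I /and3P[IT In0 /eqP xE]] xn0].
case/set0Pn: In0 => a aI.
have xa: forall y, y \in I -> x \subset y by move=> y yI; rewrite -xE; exact: bigcap_inf.
have yT: forall y, y \in I -> y \in T by move=> y yI; exact: (subsetP IT).
case: (boolP [forall y in I, y == a]) => [/forall_inP Hall | /forall_inPn [b bI bna]].
  constructor 1; suff ->: x = a by exact: yT.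
  rewrite -xE; apply/setP => i; apply/bigcapP/idP => [H|ia y yI]; first exact: H a aI.
  by rewrite (eqP (Hall y yI)).
constructor 2; exists a, b; split; [exact: yT|exact: yT|by rewrite eq_sym|].
rewrite -xE; apply/setP => i; rewrite inE; apply/bigcapP/andP => [H|[ia ib] y yI].
  by split; apply: H.
by case: (o3 x a b y xn0 (yT _ aI) (yT _ bI) (yT _ yI) (xa _ aI) (xa _ bI) (xa _ yI))
  => [abE|<-|<-] //; rewrite abE eqxx in bna.
Qed.

Lemma arcP n (T : {set {set 'I_n}}) x y : hasse_arc T x y ->
  [/\ x \in Mstar T, y \in Mstar T, y \proper x &
      forall m, m \in Mstar T -> y \proper m -> m \proper x -> False].
Proof.
case/and4P => xM yM yx /forall_inP H; split => // m mM ym mx.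
by move: (H m mM); rewrite ym mx.
Qed.

Lemma proper_single n (v : {set 'I_n}) i : v != set0 -> v \proper [set i] -> False.
Proof.
move=> vn0 /properP[]; rewrite subset1 => /orP[]/eqP vE; last by rewrite vE eqxx in vn0.
by case=> j; rewrite vE => ->.
Qed.

Lemma nonsingle n (T : {set {set 'I_n}}) x y : own3 T -> x \in Mstar T ->
  y \in Mstar T -> y \proper x ->
  x \in T \/ exists a b, [/\ a \in T, b \in T, a != b & x = a :&: b].
Proof.
move=> o3 xM yM yx; case: (Mstar_struct o3 xM) => [|?|[i xi]]; [by left|by right|].
by move: yx; rewrite xi => /(proper_single (Mstar_neq0 yM)).
Qed.

Lemma cap2 n (T : {set {set 'I_n}}) v a b c : own3 T -> v != set0 ->
  a \in T -> b \in T -> a != b -> c \in T -> v \subset a :&: b -> v \subset c ->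
  c = a \/ c = b.
Proof.
move=> o3 vn0 aT bT ab cT; rewrite subsetI => /andP[va vb] vc.
by case: (o3 v a b c vn0 aT bT cT va vb vc) => [abE|->|->]; [rewrite abE eqxx in ab| right| left].
Qed.

Lemma capcap n (T : {set {set 'I_n}}) v a b c d : own3 T -> v != set0 ->
  a \in T -> b \in T -> a != b -> c \in T -> d \in T -> c != d ->
  v \subset a :&: b -> v \subset c :&: d -> c :&: d = a :&: b.
Proof.
move=> o3 vn0 aT bT ab cT dT cd vab; rewrite subsetI => /andP[vc vd].
case: (cap2 o3 vn0 aT bT ab cT vab vc) => cE;
case: (cap2 o3 vn0 aT bT ab dT vab vd) => dE; rewrite cE dE in cd *.
- by rewrite eqxx in cd.
- by [].
- by rewrite setIC.
- by rewrite eqxx in cd.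
Qed.


Lemma upT n (T : {set {set 'I_n}}) w1 w2 v : own3 T ->
  hasse_arc T w1 v -> hasse_arc T w2 v -> w1 != w2 -> w1 \in T.
Proof.
move=> o3 /arcP[w1M vM vw1 min1] /arcP[w2M _ vw2 min2] w12.
apply/negPn/negP => w1T.
have vn0 := Mstar_neq0 vM.
case: (nonsingle o3 w1M vM vw1) => [H|[a [b [aT bT ab w1E]]]]; first by rewrite H in w1T.
have vab : v \subset a :&: b by rewrite -w1E; exact: proper_sub.
case: (nonsingle o3 w2M vM vw2) => [w2T|[c [d [cT dT cd w2E]]]].
  have vw2' : v \subset w2 by exact: proper_sub.
  have w1w2 : w1 \subset w2.
    by case: (cap2 o3 vn0 aT bT ab w2T vab vw2') => ->; rewrite w1E ?subsetIl ?subsetIr.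
  apply: (min2 w1 w1M vw1); by rewrite properEneq w12 w1w2.
have : c :&: d = a :&: b by apply: (capcap o3 vn0 aT bT ab cT dT cd vab); rewrite -w2E; exact: proper_sub.
by rewrite -w1E -w2E => E; rewrite E eqxx in w12.
Qed.

Lemma up2 n (T : {set {set 'I_n}}) w1 w2 v : own3 T ->
  (forall m, m \in T -> m != set0) ->
  hasse_arc T w1 v -> hasse_arc T w2 v -> w1 != w2 ->
  [/\ w1 \in T, w2 \in T & v = w1 :&: w2].
Proof.
move=> o3 hT a1 a2 w12.
have w1T := upT o3 a1 a2 w12.
have w2T : w2 \in T by apply: (upT o3 a2 a1); rewrite eq_sym.
split => //.
move: a1 a2 => /arcP[w1M vM vw1 min1] /arcP[w2M _ vw2 min2].
have vz : v \subset w1 :&: w2 by rewrite subsetI !proper_sub.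
have zn0 : w1 :&: w2 != set0.
  case/set0Pn: (Mstar_neq0 vM) => x xv; apply/set0Pn; exists x; exact: (subsetP vz).
have zM := capT_Mstar w1T w2T zn0.
case: (eqVneq v (w1 :&: w2)) => // vnz.
have vpz : v \proper w1 :&: w2 by rewrite properEneq vnz vz.
case: (eqVneq (w1 :&: w2) w1) => zw1.
  have w1w2 : w1 \subset w2 by rewrite -zw1 subsetIr.
  by case: (min2 w1 w1M vw1); rewrite properEneq w12 w1w2.
by case: (min1 _ zM vpz); rewrite properEneq zw1 subsetIl.
Qed.

Lemma edge_sym n (T : {set {set 'I_n}}) x y : Gstar_edge T x y = Gstar_edge T y x.
Proof. by rewrite /Gstar_edge orbC. Qed.

Lemma edgeTT n (T : {set {set 'I_n}}) x y : Gstar_edge T x y ->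
  x != y /\ (x :&: y = x \/ x :&: y = y).
Proof.
case/orP => /arcP[_ _ p _]; move: (p); rewrite properEneq => /andP[ne s].
  by split; [rewrite eq_sym|right; apply/setIidPr].
by split => //; left; apply/setIidPl.
Qed.

Lemma edge_M n (T : {set {set 'I_n}}) x y : Gstar_edge T x y ->
  x \in Mstar T /\ y \in Mstar T.
Proof. by case/orP => /arcP[]. Qed.

Lemma edgeTT_n0 n (T : {set {set 'I_n}}) x y : Gstar_edge T x y ->
  x :&: y != set0.
Proof.
move=> e; have [xM yM] := edge_M e.
by case: (edgeTT e) => _ [E|E]; rewrite E; [exact: Mstar_neq0 xM|exact: Mstar_neq0 yM].
Qed.

Lemma leaf n (T : {set {set 'I_n}}) v u t : own3 T ->
  v \notin T -> hasse_arc T v u -> Gstar_edge T u t -> t = v.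
Proof.
move=> o3 vT avu; have /arcP[vM uM uv min] := avu.
have un0 := Mstar_neq0 uM.
case: (nonsingle o3 vM uM uv) => [H|[a [b [aT bT ab vE]]]]; first by rewrite H in vT.
case/orP => [aut|atu]; last first.
  case: (eqVneq t v) => // tv.
  by have := upT o3 avu atu; rewrite eq_sym tv => /(_ isT) H; rewrite H in vT.
have /arcP[_ tM tu _] := aut.
have uab : u \subset a :&: b by rewrite -vE; exact: proper_sub.
case: (nonsingle o3 uM tM tu) => [uT|[c [d [cT dT cd uE]]]].
  case: (cap2 o3 un0 aT bT ab uT uab (subxx u)) => uE.
    by move: uv; rewrite properE => /andP[_ /negP[]]; rewrite vE uE subsetIl.
  by move: uv; rewrite properE => /andP[_ /negP[]]; rewrite vE uE subsetIr.
have := capcap o3 un0 aT bT ab cT dT cd uab; rewrite -uE => /(_ (subxx u)) uvE.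
by move: uv; rewrite uvE -vE properxx.
Qed.

Definition P2 n (T : {set {set 'I_n}}) x :=
  exists y z, [/\ y != z, Gstar_edge T x y & Gstar_edge T x z].

Lemma Vlem n (T : {set {set 'I_n}}) u v w : own3 T ->
  (forall m, m \in T -> m != set0) ->
  Gstar_edge T u v -> Gstar_edge T v w -> u != w -> v \notin T ->
  P2 T u -> P2 T w -> [/\ u \in T, w \in T & v = u :&: w].
Proof.
move=> o3 hT euv evw uw vT [y1 [z1 [yz1 ey1 ez1]]] [y2 [z2 [yz2 ey2 ez2]]].
have auv : hasse_arc T u v.
  case/orP: euv => // avu.
  have := leaf o3 vT avu ey1; have := leaf o3 vT avu ez1.
  by move=> e1 e2; rewrite e1 e2 eqxx in yz1.
have awv : hasse_arc T w v.
  case/orP: evw => // avw.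
  have := leaf o3 vT avw ey2; have := leaf o3 vT avw ez2.
  by move=> e1 e2; rewrite e1 e2 eqxx in yz2.
exact: up2 o3 hT auv awv uw.
Qed.

Definition Ed n (T : {set {set 'I_n}}) k (c : nat -> {set 'I_n}) x y :=
  Gstar_edge T x y \/
  [/\ x \in T, y \in T, x :&: y != set0 & forall j, j < k -> c j != x :&: y].

Definition Inv n (T : {set {set 'I_n}}) k (c : nat -> {set 'I_n}) :=
  [/\ 3 <= k, (forall i j, i < k -> j < k -> c i = c j -> i = j),
      (forall i, i < k -> c i \in Mstar T /\ P2 T (c i)) &
      (forall i, i < k -> Ed T k c (c i) (c (i.+1 %% k)))].

Definition Tcyc n (T : {set {set 'I_n}}) k (c : nat -> {set 'I_n}) :=
  [/\ 3 <= k, (forall i j, i < k -> j < k -> c i = c j -> i = j),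
      (forall i, i < k -> c i \in T) &
      (forall i, i < k -> c i :&: c (i.+1 %% k) != set0)].

Lemma rot_Inv n (T : {set {set 'I_n}}) k c s :
  Inv T k c -> Inv T k (fun t => c ((t + s) %% k)).
Proof.
case=> k3 inj Mv Edc; have k0 : 0 < k by lia.
have lt : forall t, (t + s) %% k < k by move=> t; exact: ltn_pmod.
have Etr : forall x y, Ed T k c x y -> Ed T k (fun t => c ((t + s) %% k)) x y.
  move=> x y [g|[xT yT n0 H]]; [by left| right; split => // j jk; exact: H _ (lt j)].
split => //.
- move=> i j ik jk /inj => /(_ (lt i) (lt j)) /eqP.
  by rewrite eqn_modDr (modn_small ik) (modn_small jk) => /eqP.
- by move=> i ik; exact: Mv _ (lt i).
- move=> i ik; apply: Etr.
  have -> : (i.+1 %% k + s) %% k = ((i + s) %% k).+1 %% k.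
    by rewrite modnDml -[((i + s) %% k).+1]addn1 modnDml addn1 addSn.
  exact: Edc _ (lt i).
Qed.

Lemma del_Inv n (T : {set {set 'I_n}}) K c : own3 T ->
  (forall m, m \in T -> m != set0) ->
  Inv T K.+1 c -> c K \notin T -> 3 <= K /\ Inv T K c.
Proof.
move=> o3 hT [k3 inj Mv Edc] cKT.
have K2 : 2 <= K by lia.
have e1 : Gstar_edge T (c K.-1) (c K).
  have := Edc K.-1 ltac:(lia).
  rewrite prednK ?modn_small //; last lia.
  by case=> [//|[_ yT _ _]]; rewrite yT in cKT.
have e2 : Gstar_edge T (c K) (c 0).
  have := Edc K (ltnSn K); rewrite modnn.
  by case=> [//|[xT _ _ _]]; rewrite xT in cKT.
have [u0 w0 cKE] : [/\ c K.-1 \in T, c 0 \in T & c K = c K.-1 :&: c 0].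
  apply: (Vlem o3 hT e1 e2 _ cKT (Mv K.-1 ltac:(lia)).2 (Mv 0 isT).2).
  by apply/eqP => /inj; move=> H; have := H ltac:(lia) isT; lia.
have cKn0 : c K != set0 by exact: Mstar_neq0 (Mv K (ltnSn K)).1.
case: (ltnP 2 K) => K3; last first.
  have KE : K = 2 by lia.
  subst K.
  have := Edc 0 isT; rewrite modn_small //.
  case=> [g|[_ _ _ H]].
    case: (edgeTT g) => _ [E|E]; move: cKE; rewrite /= setIC E => /inj; lia.
  by have := H 2 isT; rewrite cKE /= setIC eqxx.
split => //; split => //.
- move=> i j ik jk; apply: inj; lia.
- move=> i ik; apply: Mv; lia.
- move=> i ik; case: (ltnP i.+1 K) => h.
    rewrite (modn_small h).
    have := Edc i (ltn_trans ik (ltnSn K)); rewrite (modn_small (ltn_trans h (ltnSn K))).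
    case=> [g|[xT yT n0 H]]; [by left|right; split => // j jK; apply: H; lia].
  have iE : i = K.-1 by lia.
  have -> : i.+1 = K by lia.
  rewrite modnn iE; right; split => //; first by rewrite -cKE.
  move=> j jK; rewrite -cKE; apply/eqP => /inj; move=> H; have := H (ltn_trans jK (ltnSn K)) (ltnSn K); lia.
Qed.

Lemma main_red n (T : {set {set 'I_n}}) : own3 T ->
  (forall m, m \in T -> m != set0) ->
  forall k c, Inv T k c -> exists k' c', Tcyc T k' c'.
Proof.
move=> o3 hT k; elim/ltn_ind: k => k IH c Hi.
case: (boolP [forall i : 'I_k, c i \in T]) => [/forallP allT | /forallPn [i ciT]].
  exists k, c; case: Hi => k3 inj Mv Edc; split => // [i ik|i ik].
    exact: (allT (Ordinal ik)).
  by case: (Edc i ik) => [g|[_ _ n0 _]] //; exact: edgeTT_n0 g.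
have k3 : 3 <= k by case: Hi.
have [K kE] : exists K, k = K.+1 by exists k.-1; lia.
subst k.
have Hi' := rot_Inv i.+1 Hi.
have cK : c ((K + i.+1) %% K.+1) = c i.
  by rewrite addnS -addSn modnDl modn_small.
have cKT : (fun t => c ((t + i.+1) %% K.+1)) K \notin T by rewrite /= cK.
have [K3 HiK] := del_Inv o3 hT Hi' cKT.
exact: IH K (ltnSn K) _ HiK.
Qed.

Lemma notclose k i j : i < j -> j < k -> ~~ cyc_close k i j ->
  i.+2 <= j /\ (j - i).+1 < k.
Proof.
move=> ij jk; rewrite /cyc_close (modn_small (_ : i.+1 < k)); last lia.
case: (ltngtP j.+1 k) => h; [rewrite (modn_small h) | lia | rewrite h modnn];
  move=> H; lia.
Qed.

Lemma close_sym k i j : cyc_close k i j = cyc_close k j i.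
Proof. by rewrite /cyc_close eq_sym; case: (j == i) => //=; rewrite orbC. Qed.

Lemma tcyc_B n (T : {set {set 'I_n}}) :
  (forall m, m \in T -> m != set0) ->
  forall k c, Tcyc T k c -> condB T.
Proof.
move=> hT k; elim/ltn_ind: k => k IH c [k3 inj cT Edc].
case: (boolP [exists i : 'I_k, exists j : 'I_k,
    [&& i < j, c i :&: c j != set0 & ~~ cyc_close k i j]]).
  case/existsP => i /existsP [j /and3P [ij n0 ncl]].
  have ik := ltn_ord i; have jk := ltn_ord j.
  have [h1 h2] := notclose ij jk ncl.
  apply: (IH (j - i).+1 h2 (fun t => c (i + t))); split.
  - lia.
  - move=> a b ha hb E; have := inj (i + a) (i + b) _ _ E; lia.
  - move=> a ha; apply: cT; lia.
  - move=> a ha; case: (ltnP a.+1 (j - i).+1) => h.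
      rewrite (modn_small h) addnS.
      have := Edc (i + a) ltac:(lia); rewrite modn_small //; lia.
    have -> : a.+1 = (j - i).+1 by lia.
    rewrite modnn addn0 (_ : i + a = j); last lia.
    by rewrite setIC.
move=> noch; exists k, c; split => // i j ik jk.
apply/idP/idP.
  move=> n0; apply/negPn/negP => ncl.
  case: (ltngtP i j) => h.
  - apply: (negP noch); apply/existsP; exists (Ordinal ik); apply/existsP.
    by exists (Ordinal jk); rewrite /= h n0 ncl.
  - apply: (negP noch); apply/existsP; exists (Ordinal jk); apply/existsP.
    by exists (Ordinal ik); rewrite /= h setIC n0 close_sym ncl.
  - by subst j; rewrite /cyc_close eqxx in ncl.
rewrite /cyc_close => /or3P [/eqP<-|/eqP<-|/eqP<-].
- by rewrite setIid; apply: hT (cT i ik).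
- exact: Edc.
- by rewrite setIC; exact: Edc.
Qed.

Lemma init n (T : {set {set 'I_n}}) : Gstar_has_cycle T -> exists k c, Inv T k c.
Proof.
case=> k [c [k3 cM inj Edc]]; exists k, c; split => //; last first.
  by move=> i ik; left; exact: Edc.
move=> i ik; split; first exact: cM.
case: i ik => [|i'] ik.
  exists (c 1), (c k.-1); split.
  - by apply/eqP => /inj H; have := H ltac:(lia) ltac:(lia); lia.
  - by have := Edc 0 ik; rewrite modn_small //; lia.
  - have := Edc k.-1 ltac:(lia); rewrite prednK; last lia.
    by rewrite modnn edge_sym.
exists (c (i'.+2 %% k)), (c i'); split.
- apply/eqP => /inj H; have := H (@ltn_pmod i'.+2 k ltac:(lia)) ltac:(lia).
  case: (ltngtP i'.+2 k) => h; [rewrite modn_small // | lia | rewrite h modnn]; lia.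
- exact: Edc.
- by have := Edc i' ltac:(lia); rewrite (modn_small ik) edge_sym.
Qed.

Theorem corollary4p11 (n : nat) (T : {set {set 'I_n}}) :
  (forall m, m \in T -> m != set0) ->
  Gstar_has_cycle T ->
  condA T \/ condB T.
Proof.
move=> hT cyc; right.
case: (boolP [exists a : {set 'I_n}, exists b : {set 'I_n}, exists d : {set 'I_n},
   [&& a \in T, b \in T, d \in T, a != b, b != d, a != d, a :&: b != set0,
       b :&: d != set0 & a :&: d != set0]]).
  case/existsP => a /existsP [b /existsP [d /and3P [aT bT /and3P [dT ab /and3P [bd ad /and3P [n1 n2 n3]]]]]].
  exists 3, (fun i => if i == 0 then a else if i == 1 then b else d); split => //.
  - by move=> [|[|[|i]]] hi //=.
  - move=> i j hi hj; case: i hi => [|[|[|i]]] //= _; case: j hj => [|[|[|j]]] //= _ E;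
      first [by rewrite E eqxx in ab | by rewrite E eqxx in bd | by rewrite E eqxx in ad
            | by rewrite -E eqxx in ab | by rewrite -E eqxx in bd | by rewrite -E eqxx in ad].
  - move=> i j hi hj; case: i hi => [|[|[|i]]] //= _; case: j hj => [|[|[|j]]] //= _;
      rewrite ?setIid ?(hT _ aT) ?(hT _ bT) ?(hT _ dT) ?n1 ?n2 ?n3 // setIC ?n1 ?n2 ?n3 //.
move=> ntri; have o3 : own3 T.
  move=> v a b d vn0 aT bT dT va vb vd.
  case: (eqVneq a b) => [->|ab]; first by constructor 1.
  case: (eqVneq b d) => [->|bd]; first by constructor 2.
  case: (eqVneq a d) => [->|ad]; first by constructor 3.
  case/set0Pn: vn0 => x xv.
  have xa := subsetP va x xv; have xb := subsetP vb x xv; have xd := subsetP vd x xv.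
  move/negP: ntri => []; apply/existsP; exists a; apply/existsP; exists b; apply/existsP; exists d.
  rewrite aT bT dT ab bd ad /=.
  by apply/and3P; split; apply/set0Pn; exists x; rewrite inE ?xa ?xb ?xd.
have [k [c Hi]] := init cyc.
have [k' [c' Ht]] := main_red o3 hT Hi.
exact: (tcyc_B hT Ht).
Qed.
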